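(* Let $(X,d,f)$ be a dynamical system where $X$ is uniformly locally compact. Then $(X,d,f)$ has the shadowing property if and only if it has the finite shadowing property.
   Context: A dynamical system $(X,d,f)$ is a separable metric space with continuous $f:X\to X$. $(X,d)$ is uniformly locally compact if there is $\varepsilon>0$ such that for every $x\in X$ the open ball of radius $\varepsilon$ centered at $x$ is contained in a compact set. A $\delta$-pseudo-orbit is a finite or infinite sequence $(x_n)$ with $d(f(x_n),x_{n+1})<\delta$; $x$ $\varepsilon$-shadows it if $d(f^n(x),x_n)<\varepsilon$ for all indices. Finite shadowing property: for every $\varepsilon>0$ there is $\delta>0$ such that every finite $\delta$-pseudo-orbit is $\varepsilon$-shadowed by some point; shadowing property: same for infinite pseudo-orbits. *)

(* Defs.v *)
From Stdlib Require Import Reals List.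
Open Scope R_scope.

Section MetricDefs.
Context {X : Type}.

Definition is_metric (d : X -> X -> R) : Prop :=
  (forall x y, 0 <= d x y) /\
  (forall x y, d x y = 0 <-> x = y) /\
  (forall x y, d x y = d y x) /\
  (forall x y z, d x z <= d x y + d y z).

Definition open_set (d : X -> X -> R) (U : X -> Prop) : Prop :=
  forall x, U x -> exists r, 0 < r /\ forall y, d x y < r -> U y.

Definition compact_set (d : X -> X -> R) (K : X -> Prop) : Prop :=
  forall (I : Type) (U : I -> X -> Prop),
    (forall i, open_set d (U i)) ->
    (forall x, K x -> exists i, U i x) ->
    exists l : list I, forall x, K x -> exists i, In i l /\ U i x.

Definition separable (d : X -> X -> R) : Prop :=
  exists (D : X -> Prop) (g : X -> nat),
    (forall x y, D x -> D y -> g x = g y -> x = y) /\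
    (forall x eps, 0 < eps -> exists y, D y /\ d x y < eps).

Definition continuous_map (d : X -> X -> R) (f : X -> X) : Prop :=
  forall x eps, 0 < eps -> exists delta, 0 < delta /\
    forall y, d x y < delta -> d (f x) (f y) < eps.

Definition dynamical_system (d : X -> X -> R) (f : X -> X) : Prop :=
  is_metric d /\ separable d /\ continuous_map d f.

Definition uniformly_locally_compact (d : X -> X -> R) : Prop :=
  exists eps, 0 < eps /\ forall x, exists K : X -> Prop,
    compact_set d K /\ forall y, d x y < eps -> K y.

Definition finite_pseudo_orbit (d : X -> X -> R) (f : X -> X) (delta : R)
  (n : nat) (xs : nat -> X) : Prop :=
  forall i, (i < n)%nat -> d (f (xs i)) (xs (S i)) < delta.

Definition pseudo_orbit (d : X -> X -> R) (f : X -> X) (delta : R)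
  (xs : nat -> X) : Prop :=
  forall i, d (f (xs i)) (xs (S i)) < delta.

Definition finite_shadows (d : X -> X -> R) (f : X -> X) (eps : R)
  (x : X) (n : nat) (xs : nat -> X) : Prop :=
  forall i, (i <= n)%nat -> d (Nat.iter i f x) (xs i) < eps.

Definition shadows (d : X -> X -> R) (f : X -> X) (eps : R)
  (x : X) (xs : nat -> X) : Prop :=
  forall i, d (Nat.iter i f x) (xs i) < eps.

Definition finite_shadowing_property (d : X -> X -> R) (f : X -> X) : Prop :=
  forall eps, 0 < eps -> exists delta, 0 < delta /\
    forall n xs, finite_pseudo_orbit d f delta n xs ->
      exists x, finite_shadows d f eps x n xs.

Definition shadowing_property (d : X -> X -> R) (f : X -> X) : Prop :=
  forall eps, 0 < eps -> exists delta, 0 < delta /\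
    forall xs, pseudo_orbit d f delta xs ->
      exists x, shadows d f eps x xs.

End MetricDefs.

(* Main.v *)
Require Import Defs.
From Stdlib Require Import Reals.
From Stdlib Require Import Lra Lia List Classical.
Open Scope R_scope.

Lemma list_bound {A : Type} (g : A -> nat) (l : list A) :
  exists M, forall a, In a l -> (g a <= M)%nat.
Proof.
  induction l as [|a l [M HM]].
  - exists 0%nat; intros a [].
  - exists (Nat.max (g a) M); intros b [->|Hb].
    + lia.
    + specialize (HM b Hb); lia.
Qed.

Lemma cluster {X : Type} (d : X -> X -> R) (Hm : is_metric d) (K : X -> Prop)
  (HK : compact_set d K) (P : nat -> X -> Prop)
  (HP : forall n, exists z, P n z) (HPK : forall n z, P n z -> K z) :
  exists y, forall eta, 0 < eta -> forall N, exists n z,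
    (N <= n)%nat /\ P n z /\ d z y < eta.
Proof.
  destruct Hm as (Hpos & Hzero & Hsym & Htri).
  apply NNPP; intro H.
  assert (H' : forall y, exists eta N, 0 < eta /\
     forall n z, (N <= n)%nat -> P n z -> eta <= d z y).
  { intro y. apply NNPP; intro H2. apply H. exists y. intros eta heta N.
    apply NNPP; intro H3. apply H2. exists eta, N. split; auto.
    intros n z hn hz. destruct (Rlt_le_dec (d z y) eta) as [h|h]; auto.
    exfalso; apply H3; exists n, z; auto. }
  set (I := {p : X * R * nat | 0 < snd (fst p) /\ forall n z,
       (snd p <= n)%nat -> P n z -> snd (fst p) <= d z (fst (fst p))}).
  set (U := fun (i : I) (y : X) => d (fst (fst (proj1_sig i))) y < snd (fst (proj1_sig i))).
  destruct (HK I U) as [l Hl].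
  - intros [[[c eta] N] [he Hc]] y hy. unfold U in *; simpl in *.
    exists (eta - d c y). split; [lra|]. intros w hw.
    specialize (Htri c y w). lra.
  - intros x Kx. destruct (H' x) as (eta & N & he & Hx).
    exists (exist _ ((x, eta), N) (conj he Hx)). unfold U; simpl.
    assert (d x x = 0) by (apply Hzero; reflexivity). lra.
  - destruct (list_bound (fun i : I => snd (proj1_sig i)) l) as [M HM].
    destruct (HP M) as [z Pz].
    destruct (Hl z (HPK _ _ Pz)) as [i [Hin Hu]].
    specialize (HM _ Hin). clear Hin.
    destruct i as [[[c eta] N] [he Hc]]. simpl in HM. unfold U in Hu; simpl in Hu.
    specialize (Hc M z HM Pz). simpl in Hc. rewrite Hsym in Hc. lra.
Qed.

Lemma iter_cont {X : Type} (d : X -> X -> R) (f : X -> X) :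
  continuous_map d f -> forall i x eps, 0 < eps -> exists delta, 0 < delta /\
    forall z, d x z < delta -> d (Nat.iter i f x) (Nat.iter i f z) < eps.
Proof.
  intros Hc i; induction i as [|i IH]; intros x eps he.
  - exists eps; split; auto.
  - destruct (Hc (Nat.iter i f x) eps he) as (e1 & he1 & H1).
    destruct (IH x e1 he1) as (e2 & he2 & H2).
    exists e2; split; auto. intros z hz. simpl. apply H1, H2, hz.
Qed.

Theorem proposition2p16 (X : Type) (d : X -> X -> R) (f : X -> X) :
  dynamical_system d f ->
  uniformly_locally_compact d ->
  (shadowing_property d f <-> finite_shadowing_property d f).
Proof.
  intros (Hm & _ & Hc) (r & hr & HK).
  pose proof Hm as (Hpos & Hzero & Hsym & Htri).
  split.
  - intros Hs eps he. destruct (Hs eps he) as (delta & hd & Hd).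
    exists delta; split; auto. intros n xs Hxs.
    set (ys := fun i => if Nat.leb i n then xs i else Nat.iter (i - n) f (xs n)).
    destruct (Hd ys) as [x Hx].
    + intro i. unfold ys.
      destruct (Nat.leb_spec i n) as [h|h];
      destruct (Nat.leb_spec (S i) n) as [h'|h'].
      * apply Hxs; lia.
      * assert (i = n) by lia. subst i. replace (S n - n)%nat with 1%nat by lia.
        simpl. assert (d (f (xs n)) (f (xs n)) = 0) by (apply Hzero; reflexivity). lra.
      * lia.
      * replace (S i - n)%nat with (S (i - n)) by lia. simpl.
        assert (d (f (Nat.iter (i - n) f (xs n))) (f (Nat.iter (i - n) f (xs n))) = 0)
          by (apply Hzero; reflexivity). lra.
    + exists x. intros i hi. specialize (Hx i). unfold ys in Hx.
      destruct (Nat.leb_spec i n); [auto | lia].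
  - intros Hf eps he.
    set (e0 := Rmin (eps / 2) r).
    assert (he0 : 0 < e0) by (unfold e0; apply Rmin_glb_lt; lra).
    assert (he0' : e0 <= eps / 2) by apply Rmin_l.
    assert (he0r : e0 <= r) by apply Rmin_r.
    destruct (Hf e0 he0) as (delta & hd & Hd).
    exists delta; split; auto. intros xs Hxs.
    destruct (HK (xs 0%nat)) as (K & HKc & HKb).
    destruct (cluster d Hm K HKc (fun n z => finite_shadows d f e0 z n xs)) as [y Hy].
    + intro n. apply Hd. intros i _. apply Hxs.
    + intros n z Hz. apply HKb. specialize (Hz 0%nat (Nat.le_0_l _)). simpl in Hz.
      rewrite Hsym. lra.
    + exists y. intro i.
      destruct (iter_cont d f Hc i y (eps / 2)) as (eta & heta & Heta); [lra|].
      destruct (Hy eta heta i) as (n & z & hn & Pz & hz).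
      specialize (Pz i hn). rewrite Hsym in hz. specialize (Heta z hz).
      specialize (Htri (Nat.iter i f y) (Nat.iter i f z) (xs i)). lra.
Qed.
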